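(* Let $\Bbbk$ be a field of characteristic zero, let $n \geq 5$ be odd and $S=\Bbbk[x_1,\ldots,x_n]$. If $I\subset S$ is an artinian ideal minimally generated by $n+2$ quadratic monomials, then $S/I$ has the WLP.
   Context: A standard graded artinian algebra $A=\bigoplus_i A_i$ has the WLP if there is a linear form $\ell$ such that $\times\ell:A_k\to A_{k+1}$ has maximal rank (is injective or surjective) for every $k$; for monomial quotients $S/I$ this is equivalent to taking $\ell=x_1+\cdots+x_n$. *)

(* Defs.v *)
From HB Require Import structures.
From mathcomp Require Import all_boot all_order all_algebra.
From mathcomp Require Import mpoly.
Set Implicit Arguments. Unset Strict Implicit. Unset Printing Implicit Defensive.
Import GRing.Theory.
Local Open Scope ring_scope.

Section MonomialIdeal.
Variables (K : fieldType) (n : nat).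

Definition in_mideal (G : seq (multinom n)) (p : {mpoly K[n]}) : Prop :=
  exists h : 'I_(size G) -> {mpoly K[n]},
    p = \sum_(i < size G) h i * 'X_[nth mnm0 G i].

(* S/I is artinian: some power m^N of the maximal homogeneous ideal lies in I,
   i.e. every homogeneous polynomial of degree N is in I. *)
Definition artinian_mideal (G : seq (multinom n)) : Prop :=
  exists N : nat, forall p : {mpoly K[n]}, p \is N.-homog -> in_mideal G p.

(* Weak Lefschetz property of A = S/I: there is a linear form l such that
   for every k the map  x l : A_k -> A_{k+1}  is injective or surjective.
   Here A_k = S_k / I_k, so injectivity means: f in S_k, l f in I => f in I;
   surjectivity means: every g in S_{k+1} is l f + (element of I) for some f in S_k. *)
Definition has_WLP (G : seq (multinom n)) : Prop :=
  exists c : 'I_n -> K,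
    let l : {mpoly K[n]} := \sum_(i < n) c i *: 'X_i in
    forall k : nat,
      (forall f : {mpoly K[n]}, f \is k.-homog ->
          in_mideal G (l * f) -> in_mideal G f)
      \/
      (forall g : {mpoly K[n]}, g \is k.+1.-homog ->
          exists f : {mpoly K[n]}, f \is k.-homog /\ in_mideal G (g - l * f)).

End MonomialIdeal.

(* Main.v *)
Require Import Defs.
From HB Require Import structures.
From mathcomp Require Import all_boot all_order all_algebra.
From mathcomp Require Import zify ring.
Set Implicit Arguments. Unset Strict Implicit. Unset Printing Implicit Defensive.
Import GRing.Theory.
Local Open Scope ring_scope.
From mathcomp Require Import mpoly.

Section CombS.
Variables (K : fieldType) (n : nat).
Hypothesis char0 : [pchar K] =i pred0.
Local Notation T := {set 'I_n}.

Definition Uop (F : T -> K) (t : T) : K := \sum_(w in t) F (t :\ w).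
Definition Dop (W : T) (F : T -> K) (s : T) : K := \sum_(v in W :\: s) F (v |: s).

Definition InjP (P : pred T) (k : nat) := forall F : T -> K,
  (forall s, F s != 0 -> P s && (#|s| == k)) ->
  (forall t, P t -> Uop F t = 0) -> forall s, F s = 0.

Lemma natr_neq0 c : (0 < c)%N -> (c%:R : K) != 0.
Proof. by move=> hc; rewrite (proj1 (pcharf0P K) char0); case: c hc. Qed.

Lemma mulrn_eq0K (x : K) c : (0 < c)%N -> x *+ c = 0 -> x = 0.
Proof.
move=> hc /eqP; rewrite -mulr_natr mulf_eq0 (negbTE (natr_neq0 hc)) orbF.
by move/eqP.
Qed.

Lemma setU1D1 (v w : 'I_n) (s : T) : v != w -> (v |: s) :\ w = v |: (s :\ w).
Proof.
move=> hvw; apply/setP=> x; rewrite !inE.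
by case: (eqVneq x v) => [->|//]; rewrite hvw.
Qed.

Lemma sum_neq0 (I : finType) (P : pred I) (f : I -> K) :
  \sum_(i | P i) f i != 0 -> exists2 i, P i & f i != 0.
Proof.
move=> h; apply/exists_inP; apply: contraNT h => /exists_inPn h.
by apply/eqP; apply: big1 => i /h; rewrite negbK => /eqP.
Qed.

Lemma commUD (W : T) (F : T -> K) (s : T) : s \subset W ->
  Dop W (Uop F) s + F s *+ #|s| = Uop (Dop W F) s + F s *+ #|W :\: s|.
Proof.
move=> sW.
have L : Dop W (Uop F) s = F s *+ #|W :\: s| +
   \sum_(v in W :\: s) \sum_(w in s) F ((v |: s) :\ w).
  rewrite /Dop -sumr_const -big_split /=. apply: eq_bigr => v.
  rewrite inE => /andP[vs _]; rewrite /Uop (bigD1 v) ?setU11 //= setU1K //.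
  congr (_ + _); apply: eq_bigl => w; rewrite !inE.
  by case: (eqVneq w v) => [->|] /=; rewrite ?(negbTE vs) ?andbT ?andbF.
have R : Uop (Dop W F) s = F s *+ #|s| +
   \sum_(w in s) \sum_(v in W :\: s) F (v |: (s :\ w)).
  rewrite /Uop -sumr_const -big_split /=; apply: eq_bigr => w ws.
  rewrite /Dop (bigD1 w) /=; last by rewrite !inE eqxx (subsetP sW) .
  rewrite setD1K //; congr (_ + _); apply: eq_bigl => v; rewrite !inE.
  by case: (eqVneq v w) => [->|] /=; rewrite ?ws ?andbF ?andbT.
rewrite L R exchange_big /=.
have -> : \sum_(w in s) \sum_(v in W :\: s) F (v |: (s :\ w)) =
          \sum_(w in s) \sum_(v in W :\: s) F ((v |: s) :\ w).
  apply: eq_bigr => w ws; apply: eq_bigr => v; rewrite inE => /andP[vs _].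
  rewrite setU1D1 //; apply: contraNneq vs => ->; exact: ws.
by ring.
Qed.

Lemma subU1 (v : 'I_n) (s W : T) : (v |: s \subset W) = (v \in W) && (s \subset W).
Proof. by rewrite subUset sub1set. Qed.


Lemma tailW (W : T) c (F : T -> K) (hc : (0 < c)%N) (P : T -> bool)
  (hF : forall s, F s != 0 -> (s \subset W) && P s)
  (hE : forall s : T, s \subset W -> Uop (Dop W F) s + F s *+ c = 0) :
  (forall s, Dop W F s = 0) -> forall s, F s = 0.
Proof.
move=> G0 s; case: (boolP (s \subset W)) => sW.
  have := hE s sW; rewrite /Uop big1 ?add0r; first exact: mulrn_eq0K.
  by move=> w _; rewrite G0.
by apply/eqP; apply: contraNT sW => /hF /andP[].
Qed.

Lemma boolW (W : T) k : forall c (F : T -> K), (2 * k <= #|W|)%N -> (0 < c)%N ->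
  (forall s, F s != 0 -> (s \subset W) && (#|s| == k)) ->
  (forall s : T, s \subset W -> Uop (Dop W F) s + F s *+ c = 0) -> forall s, F s = 0.
Proof.
elim: k => [|k IH] c F hk hc hF hE.
all: have tail := tailW hc hF hE.
  apply: tail => s; apply: big1 => v; rewrite inE => /andP[vs _].
  apply/eqP; apply: contraT => /hF /andP[_ /eqP]; by rewrite cardsU1 vs.
apply: tail; apply: (IH (c + (#|W| - 2 * k))%N); first by lia.
- by lia.
- move=> s /sum_neq0 [v]; rewrite inE => /andP[vs vW] /hF /andP[].
  rewrite subU1 vW /= => -> /=; by rewrite cardsU1 vs.
- move=> s sW; have := commUD (Dop W F) sW.
  have -> : Dop W (Uop (Dop W F)) s = - (Dop W F s *+ c).
    rewrite /Dop -sumrMnl -sumrN; apply: eq_bigr => v; rewrite inE => /andP[vs vW].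
    have := hE (v |: s); rewrite subU1 vW sW => /(_ isT) /eqP.
    by rewrite addr_eq0 => /eqP.
  set x := Dop W F s; set U := Uop (Dop W (Dop W F)) s.
  case: (eqVneq x 0) => [->|hx].
    by rewrite !mul0rn !addr0 oppr0 => <-.
  have hs : #|s| = k.
    move: hx; rewrite /x => /sum_neq0 [v]; rewrite inE => /andP[vs vW] /hF /andP[_].
    by rewrite cardsU1 vs => /eqP [].
  have hWs : #|W :\: s| = ((#|W| - 2 * k) + k)%N.
    by rewrite cardsD (setIidPr sW) hs; lia.
  rewrite hs hWs mulrnDr => H.
  have HU : U = - (x *+ c) + x *+ k - (x *+ (#|W| - 2 * k) + x *+ k) by rewrite H; ring.
  by rewrite HU mulrnDr; ring.
Qed.

Lemma BoolInj (W : T) k : (2 * k < #|W|)%N -> InjP (fun s => s \subset W) k.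
Proof.
move=> hk F hF hU; apply: (@boolW W k (#|W| - 2 * k)%N); [lia | lia | exact: hF |].
move=> s sW; have := commUD F sW.
have -> : Dop W (Uop F) s = 0.
  by apply: big1 => v; rewrite inE => /andP[vs vW]; apply: hU; rewrite subU1 vW sW.
case: (eqVneq (F s) 0) => [->|hx].
  by rewrite !mul0rn !addr0 => <-.
have /andP[_ /eqP hs] := hF s hx.
have hWs : #|W :\: s| = ((#|W| - 2 * k) + k)%N.
  by rewrite cardsD (setIidPr sW) hs; lia.
rewrite hs hWs mulrnDr add0r => E; rewrite -[RHS](subrr (F s *+ k)) {1}E; ring.
Qed.

Lemma card_le_n (s : T) : (#|s| <= n)%N.
Proof. by have := max_card s; rewrite card_ord. Qed.

Lemma cardTD (s : T) : #|[set: 'I_n] :\: s| = (n - #|s|)%N.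
Proof. by rewrite cardsD setTI cardsT card_ord. Qed.

Lemma surjS d : forall j c (G : T -> K), (n < j + d)%N -> (n <= 2 * j)%N -> (0 < c)%N ->
  (forall s, G s != 0 -> #|s| == j) ->
  exists H : T -> K, (forall s, H s != 0 -> #|s| == j) /\
    forall s, Dop setT (Uop H) s + H s *+ c = G s.
Proof.
elim: d => [|d IH] j c G hj h2j hc hG.
  exists (fun _ => 0); split=> [s|s]; first by rewrite eqxx.
  have -> : G s = 0.
    apply/eqP; apply: contraT => /hG /eqP hs; have := card_le_n s; lia.
  rewrite mul0rn addr0; apply: big1 => v _; exact: big1.
have [||||H' [hH' eH']] := IH (j.+1) (c + (2 * j.+1 - n))%N (Uop G); try lia.
  move=> t /sum_neq0 [w wt] /hG /eqP hw.
  by rewrite (cardsD1 w t) wt hw.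
pose D := Dop [set: 'I_n].
have key : forall t, D (Uop H') t + H' t *+ (c + (2 * j.+1 - n)) =
                     Uop (D H') t + H' t *+ c.
  move=> t; have := commUD H' (subsetT t); rewrite -/D.
  case: (eqVneq (H' t) 0) => [->|hx].
    by rewrite !mul0rn !addr0.
  have ht := eqP (hH' t hx); have := card_le_n t; rewrite ht cardTD ht => hn E.
  have E1 : H' t *+ (c + (2 * j.+1 - n)) = H' t *+ (c + j.+1) - H' t *+ (n - j.+1).
    apply/eqP; rewrite eq_sym subr_eq -mulrnDr; apply/eqP; congr (_ *+ _); lia.
  rewrite E1 mulrnDr; apply/eqP; rewrite -subr_eq0; apply/eqP.
  transitivity ((D (Uop H') t + H' t *+ j.+1) - (Uop (D H') t + H' t *+ (n - j.+1))); [ring | by rewrite E subrr].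
pose H s := (c%:R)^-1 * (G s - D H' s).
have DUG : forall s, D (Uop G) s = D (Uop (D H')) s + D H' s *+ c.
  move=> s; rewrite /D /Dop -sumrMnl -big_split /=; apply: eq_bigr => v _.
  by rewrite -eH' key.
exists H; split.
  move=> s; rewrite /H mulf_eq0 negb_or => /andP[_].
  case: (eqVneq (G s) 0) => [->|/hG //]; rewrite sub0r oppr_eq0.
  move=> /sum_neq0 [v]; rewrite inE => /andP[vs _] /hH'.
  by rewrite cardsU1 vs.
move=> s.
have UH : forall t, Uop H t = (c%:R)^-1 * (Uop G t - Uop (D H') t).
  by move=> t; rewrite /Uop -sumrB mulr_sumr.
have DUH : D (Uop H) s = (c%:R)^-1 * (D (Uop G) s - D (Uop (D H')) s).
  rewrite /D /Dop -sumrB mulr_sumr; apply: eq_bigr => v _; exact: UH.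
rewrite -/D DUH DUG -(mulr_natr (D H' s)) -(mulr_natr (H s)) /H.
have hc0 := natr_neq0 hc.
by field.
Qed.

Lemma SurjB k : (n < 2 * k.+1)%N -> forall G : T -> K,
  (forall s, G s != 0 -> #|s| == k.+1) ->
  exists F : T -> K, (forall s, F s != 0 -> #|s| == k) /\ forall t, Uop F t = G t.
Proof.
move=> hk G hG.
have [||||H [hH eH]] := @surjS n.+1 k.+1 (2 * k.+1 - n)%N G; try lia; first exact: hG.
exists (Dop setT H); split.
  move=> s /sum_neq0 [v]; rewrite inE => /andP[vs _] /hH.
  by rewrite cardsU1 vs.
move=> t; have := commUD H (subsetT t); rewrite -eH.
case: (eqVneq (H t) 0) => [->|hx].
  by rewrite !mul0rn !addr0.
have ht := eqP (hH t hx); have := card_le_n t; rewrite ht cardTD ht => hn E.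
have E1 : H t *+ k.+1 = H t *+ (n - k.+1) + H t *+ (2 * k.+1 - n).
  rewrite -mulrnDr; congr (_ *+ _); lia.
rewrite E1 in E; apply/eqP; rewrite -subr_eq0; apply/eqP.
transitivity ((Uop (Dop setT H) t + H t *+ (n - k.+1)) - (Dop setT (Uop H) t + (H t *+ (n - k.+1) + H t *+ (2 * k.+1 - n)))); [ring | by rewrite E subrr].
Qed.

Lemma InjP_ext (P Q : pred T) k : P =1 Q -> InjP P k -> InjP Q k.
Proof.
move=> PQ hP F hF hU; apply: hP => [s /hF|t Pt]; first by rewrite PQ.
by apply: hU; rewrite -PQ.
Qed.

Lemma deletion (P : pred T) (a : 'I_n) k :
  InjP (fun s => P s && (a \notin s)) k ->
  ((0 < k)%N -> InjP (fun s => P (a |: s) && (a \notin s)) k.-1) ->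
  InjP P k.
Proof.
move=> h0 h1 F hF hU.
pose F0 (s : T) := if a \in s then 0 else F s.
have F0z : forall s, F0 s = 0.
  apply: (h0 F0).
    by move=> s; rewrite /F0; case: ifP => [_|_ /hF /andP[-> ->] //]; rewrite eqxx.
  move=> t /andP[Pt at_]; rewrite -(hU t Pt); apply: eq_bigr => w _.
  by rewrite /F0 in_setD1 (negbTE at_) andbF.
have Fna : forall s : T, a \notin s -> F s = 0.
  by move=> s ha; have := F0z s; rewrite /F0 (negbTE ha).
move=> s; case: (boolP (a \in s)) => [ha|]; last exact: Fna.
move: h0 h1 hF hU; case: k => [|k] h0 h1 hF hU.
  apply/eqP; apply: contraT => /hF /andP[_ /eqP /cards0_eq] s0.
  by move: ha; rewrite s0 inE.
pose F1 (r : T) := if a \in r then 0 else F (a |: r).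
have F1z : forall r, F1 r = 0.
  apply: (h1 isT F1).
    move=> r; rewrite /F1; case: ifP => [_|ha']; first by rewrite eqxx.
    move=> /hF /andP[-> /eqP h] /=; apply/eqP; move: h.
    rewrite cardsU1 ha' /=; lia.
  move=> r /andP[Pr ar]; have := hU _ Pr; rewrite /Uop (bigD1 a) ?setU11 //=.
  rewrite setU1K // Fna // add0r => E; rewrite -[RHS]E /Uop.
  apply: eq_big => [w|w wr].
    by rewrite !inE; case: (eqVneq w a) => [->|] /=; rewrite ?(negbTE ar) ?andbT ?andbF.
  have hwa : a != w by apply: contraNneq ar => ->.
  by rewrite /F1 in_setD1 (negbTE ar) andbF setU1D1.
have := F1z (s :\ a); rewrite /F1 setD11 setD1K //.
Qed.

Definition Pf (W : T) (E : seq T) : pred T :=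
  fun s => (s \subset W) && all (fun e : T => ~~ (e \subset s)) E.

Lemma subU1D (e s : T) a : (e \subset a |: s) = (e :\ a \subset s).
Proof.
apply/subsetP/subsetP => h x.
  by rewrite in_setD1 => /andP[xa xe]; have := h x xe; rewrite in_setU1 (negbTE xa).
move=> xe; rewrite in_setU1; case: (eqVneq x a) => //= xa.
by apply: h; rewrite in_setD1 xa.
Qed.

Lemma injE N : forall (W : T) (E : seq T) k, (#|W| + size E <= N)%N ->
  (2 * k + size E < #|W|)%N -> InjP (Pf W E) k.
Proof.
elim: N => [|N IH] W E k hN hk; first by lia.
case: E hN hk => [|e E'] hN hk.
  apply: (@InjP_ext (fun s => s \subset W)); last by apply: BoolInj; rewrite addn0 in hk.
  by move=> s; rewrite /Pf /= andbT.
case: (boolP (e \subset W)) => eW; last first.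
  apply: (@InjP_ext (Pf W E')); last by apply: IH => /=; rewrite /= in hN hk; lia.
  move=> s; rewrite /Pf /=; case: (boolP (s \subset W)) => //= sW.
  suff -> : ~~ (e \subset s) by [].
  by apply: contra eW => es; exact: subset_trans es sW.
case: (set_0Vmem e) => [e0|[a ae]].
  move=> F hF _ s; apply/eqP; apply: contraT => /hF.
  by rewrite /Pf /= e0 sub0set /= andbF.
have aW := subsetP eW a ae.
have cW : #|W| = (#|W :\ a|).+1 by rewrite (cardsD1 a W) aW.
rewrite /= cW in hN hk.
apply: (deletion (a := a)).
  apply: (@InjP_ext (Pf (W :\ a) E')); last by apply: IH; set x := #|W :\ a| in hN hk *; lia.
  move=> s; rewrite /Pf /= subsetD1; case: (boolP (a \in s)) => as_ /=.
    by rewrite !andbF.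
  have -> : ~~ (e \subset s).
    by apply/negP => /subsetP /(_ a ae); rewrite (negbTE as_).
  by rewrite !andbT.
move=> kpos.
apply: (@InjP_ext (Pf (W :\ a) (map (fun e => e :\ a) (e :: E')))); last first.
  move: hk kpos; case: k => [|k] // hk _; apply: IH; rewrite /= size_map; set x := #|W :\ a| in hN hk *; lia.
move=> s; rewrite /Pf subsetD1 all_map subU1 aW /=.
have -> : all (preim (fun e0 : T => e0 :\ a) (fun e0 : T => ~~ (e0 \subset s))) E' =
          all (fun e0 : T => ~~ (e0 \subset a |: s)) E'.
  by apply: eq_all => e0 /=; rewrite subU1D.
rewrite subU1D.
by case: (s \subset W); case: (a \in s); case: (e :\ a \subset s); case: (all _ E').
Qed.
End CombS.

Section PolyS.
Variables (K : fieldType) (n : nat).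
Local Notation T := {set 'I_n}.
Implicit Types (p f : {mpoly K[n]}) (m g : 'X_{1..n}).

Definition chi (s : T) : 'X_{1..n} := [multinom (i \in s : nat) | i < n].

Lemma chiE (s : T) i : chi s i = (i \in s). Proof. by rewrite mnmE. Qed.

Lemma coefMX p g m :
  (p * 'X_[g])@_m = if (g <= m)%MM then p@_(m - g) else 0.
Proof.
case: ifP => h.
  by rewrite -{1}(submK h) addmC mcoeffMX.
rewrite {1}(mpolyE p) mulr_suml raddf_sum big1 // => k _.
rewrite /= -scalerAl -mpolyXD mcoeffZ mcoeffX.
case: eqP => [E|]; last by rewrite mulr0.
by move: h; rewrite -E lem_addl.
Qed.

Lemma inI (G : seq 'X_{1..n}) p : in_mideal G p ->
  forall m, p@_m != 0 -> has (fun g => (g <= m)%MM) G.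
Proof.
case=> h -> m; apply: contraR => hn.
rewrite raddf_sum big1 //= => i _; rewrite coefMX ifF //.
apply: negbTE; apply: contra hn => hle; apply/hasP.
by exists (nth mnm0 G i) => //; apply: mem_nth.
Qed.

Lemma Iin (G : seq 'X_{1..n}) p :
  (forall m, p@_m != 0 -> has (fun g => (g <= m)%MM) G) -> in_mideal G p.
Proof.
move=> hp.
pose idx m := find (fun g => (g <= m)%MM) G.
exists (fun i : 'I_(size G) => \sum_(m <- msupp p | idx m == i) p@_m *: 'X_[m - nth mnm0 G i]).
have -> : \sum_(i < size G)
   (\sum_(m <- msupp p | idx m == i) p@_m *: 'X_[m - nth mnm0 G i]) * 'X_[nth mnm0 G i]
   = \sum_(i < size G) \sum_(m <- msupp p | idx m == i) p@_m *: 'X_[m].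
  apply: eq_bigr => i _; rewrite mulr_suml big_seq_cond [RHS]big_seq_cond.
  apply: eq_bigr => m /andP[mp /eqP hi].
  rewrite -scalerAl -mpolyXD submK //; rewrite -hi.
  by apply: (nth_find mnm0 (a := fun g => (g <= m)%MM)); apply: hp; rewrite -mcoeff_msupp.
rewrite (exchange_big_dep xpredT) //= {1}(mpolyE p) big_seq [RHS]big_seq.
apply: eq_bigr => m mp.
have hlt : (idx m < size G)%N.
  by rewrite -has_find; apply: hp; rewrite -mcoeff_msupp.
by rewrite (big_pred1 (Ordinal hlt)) // => i /=; rewrite eq_sym.
Qed.

Lemma mdeg_chi (s : T) : mdeg (chi s) = #|s|.
Proof.
rewrite mdegE -sum1_card [RHS]big_mkcond /=; apply: eq_bigr => i _.
by rewrite chiE; case: (i \in s).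
Qed.

Lemma chi_inj : injective chi.
Proof.
move=> s t H; apply/setP => i; have := congr1 (fun m : 'X_{1..n} => m i) H.
by rewrite /= !chiE; case: (i \in s); case: (i \in t).
Qed.

Lemma le_chi i (t : T) : (U_(i) <= chi t)%MM = (i \in t).
Proof.
apply/mnm_lepP/idP => [h | it j].
  by have := h i; rewrite mnm1E eqxx chiE; case: (i \in t).
by rewrite mnm1E chiE; case: eqP => [<-|]; rewrite ?it.
Qed.

Lemma chi_sub i (t : T) : i \in t -> (chi t - U_(i))%MM = chi (t :\ i).
Proof.
move=> it; apply/mnmP => j; rewrite mnmBE mnm1E !chiE in_setD1.
case: eqP => [<-|/eqP]; first by rewrite it eqxx.
by rewrite eq_sym => /negbTE ->; rewrite subn0.
Qed.

Lemma chi_mono (s t : T) : s \subset t -> (chi s <= chi t)%MM.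
Proof.
move=> /subsetP st; apply/mnm_lepP => i; rewrite !chiE.
by case: (boolP (i \in s)) => // /st ->.
Qed.

Lemma sqf m : (forall i, m i <= 1)%N -> m = chi [set i | m i != 0%N].
Proof.
move=> h; apply/mnmP => i; rewrite chiE inE.
by have := h i; case: (m i) => [|[|]].
Qed.

Lemma coef_l (c : 'I_n -> K) f (t : T) :
  ((\sum_(i < n) c i *: 'X_i) * f)@_(chi t) = \sum_(w in t) c w * f@_(chi (t :\ w)).
Proof.
rewrite mulr_suml raddf_sum [RHS]big_mkcond /=; apply: eq_bigr => i _.
rewrite /= -scalerAl mcoeffZ (mulrC _ f) coefMX le_chi.
by case: ifP => it; rewrite ?mulr0 // chi_sub.
Qed.

End PolyS.

Theorem proposition6p5 (K : fieldType) (n : nat) (G : seq (multinom n)) :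
  [pchar K] =i pred0 ->
  odd n -> (5 <= n)%N ->
  size G = (n + 2)%N ->
  uniq G ->
  all (fun m : multinom n => mdeg m == 2%N) G ->
  artinian_mideal K G ->
  has_WLP K G.
Proof.
move=> char0 oddn n5 sizeG uniqG degG art.
pose sq (i : 'I_n) : 'X_{1..n} := [multinom (if j == i then 2 else 0)%N | j < n].
have sqE : forall i j, sq i j = (if j == i then 2 else 0)%N by move=> i j; rewrite mnmE.
have sqG : forall i, sq i \in G.
  move=> i; case: art => N hN.
  pose m : 'X_{1..n} := [multinom (if j == i then N else 0)%N | j < n].
  have hom : ('X_[m] : {mpoly K[n]}) \is N.-homog.
    rewrite dhomogX /= mdegE (bigD1 i) //= big1 ?addn0; first by rewrite mnmE eqxx.
    by move=> j /negbTE hj; rewrite mnmE hj.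
  have := inI (hN _ hom) (m := m); rewrite mcoeffX eqxx oner_neq0 => /(_ isT) /hasP [g gG gm].
  have g0 : forall j, j != i -> g j = 0%N.
    move=> j hj; have := mnm_lepP gm j; rewrite mnmE (negbTE hj); lia.
  have gi : g i = 2%N.
    have := allP degG g gG; rewrite mdegE (bigD1 i) //= big1 ?addn0; first by move/eqP.
    by move=> j /g0.
  suff -> : sq i = g by [].
  apply/mnmP => j; rewrite sqE; case: eqP => [->|/eqP hj]; [by rewrite gi | by rewrite g0].
pose good (m : 'X_{1..n}) := ~~ has (fun g => (g <= m)%MM) G.
have goodsq : forall m, good m -> forall i, (m i <= 1)%N.
  move=> m hm i; rewrite leqNgt; apply: contra hm => hi; apply/hasP; exists (sq i) => //.
  by apply/mnm_lepP => j; rewrite sqE; case: eqP => [->|].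
pose P1 (g : 'X_{1..n}) := [forall i, g i <= 1]%N.
pose E := map (fun g : 'X_{1..n} => [set i : 'I_n | g i != 0%N]) (filter P1 G).
have sizeE : (size E <= 2)%N.
  rewrite size_map size_filter.
  have := count_predC P1 G; rewrite sizeG.
  suff : (n <= count (predC P1) G)%N by lia.
  rewrite -size_filter.
  have := @uniq_leq_size _ (map sq (enum 'I_n)) (filter (predC P1) G).
  rewrite size_map size_enum_ord; apply.
    rewrite map_inj_uniq ?enum_uniq // => i j hij.
    have := congr1 (fun m : 'X_{1..n} => m i) hij; rewrite /= !sqE eqxx.
    by case: eqP.
  move=> x /mapP [i _ ->]; rewrite mem_filter sqG andbT /= /P1.
  by apply/forallPn; exists i; rewrite sqE eqxx.
have indep : forall s, Pf [set: 'I_n] E s = good (chi s).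
  move=> s; rewrite /Pf subsetT /= all_map all_filter /good -all_predC.
  apply: eq_all => g /=.
  case: (boolP (P1 g)) => hg /=.
    congr negb; apply/subsetP/mnm_lepP => [h i | h x].
      rewrite chiE; case: (eqVneq (g i) 0%N) => [->//|gi].
      have := h i; rewrite inE gi => /(_ isT) ->; exact: (forallP hg i).
    rewrite inE => gx; have := h x; rewrite chiE; case: (x \in s) => //.
    by move: gx; case: (g x).
  move: hg => /forallPn [i hi]; apply/esym/negP => /mnm_lepP /(_ i).
  rewrite chiE; move: hi; case: (i \in s) => /=; lia.
clearbody E.
exists (fun _ => 1) => /= k.
case: (ltnP (2 * k + 2) n) => hk.
  left => f hf hI.
  pose F (s : {set 'I_n}) := if good (chi s) then f@_(chi s) else 0.
  have Fz : forall s, F s = 0.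
    apply: (@injE K n char0 (n + size E) [set: 'I_n] E k _ _ F); rewrite ?cardsT ?card_ord.
    - by [].
    - exact: (leq_ltn_trans (leq_add (leqnn (2 * k)) sizeE) hk).
    - move=> s; rewrite /F indep; case: ifP => [gs fs|_]; last by rewrite eqxx.
      rewrite /=.
      have h := dhomog_mf hf; have {h} := h (chi s); rewrite mcoeff_msupp => /(_ fs) /= h.
      by rewrite -mdeg_chi h.
    - move=> t; rewrite indep => gt.
      have hz : ((\sum_(i < n) 1 *: 'X_i) * f)@_(chi t) = 0.
        by apply/eqP; apply: contraR gt => /(inI hI).
      rewrite coef_l in hz; rewrite -[RHS]hz; apply: eq_bigr => w wt.
      rewrite mul1r /F ifT //; apply: contra gt => /hasP [g gG gle].
      apply/hasP; exists g => //; apply: lepm_trans gle _.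
      by apply: chi_mono; apply: subD1set.
  apply: Iin => m fm; apply/negPn/negP => hm.
  have hm' : good m by [].
  move: (Fz [set i | m i != 0%N]); rewrite /F -(sqf (goodsq _ hm')) ifT //.
  by move/eqP; rewrite (negbTE fm).
have hk' : (n < 2 * k.+1)%N.
  have : n != (2 * k.+1)%N by apply: contraTneq oddn => ->; rewrite oddM.
  lia.
right => g hg.
pose Gf (s : {set 'I_n}) := if #|s| == k.+1 then g@_(chi s) else 0.
have [|F [hF eF]] := @SurjB K n char0 k hk' Gf.
  by move=> s; rewrite /Gf; case: ifP => [//|_]; rewrite eqxx.
exists (\sum_(s : {set 'I_n}) F s *: 'X_[chi s]); split.
  apply: rpred_sum => s _; case: (eqVneq (F s) 0) => [->|/hF hs].
    by rewrite scale0r rpred0.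
  by apply: rpredZ; rewrite dhomogX /= mdeg_chi (eqP hs).
apply: Iin => m; apply: contraR => hm.
have hm' : good m by [].
rewrite (sqf (goodsq _ hm')); set s := [set i | m i != 0%N].
have cf : forall r, (\sum_(s : {set 'I_n}) F s *: 'X_[chi s])@_(chi r) = F r.
  move=> r; rewrite raddf_sum (bigD1 r) //= mcoeffZ mcoeffX eqxx mulr1 big1 ?addr0 //.
  move=> s' hs'; rewrite /= mcoeffZ mcoeffX (inj_eq (@chi_inj n)) (negbTE hs') mulr0 //.
rewrite mcoeffB coef_l.
have -> : \sum_(w in s) 1 * (\sum_(s0 : {set 'I_n}) F s0 *: 'X_[chi s0])@_(chi (s :\ w)) = Uop F s.
  by apply: eq_bigr => w _; rewrite mul1r cf.
rewrite eF /Gf; case: ifP => [_|hs]; first by rewrite subrr.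
rewrite (dhomog_nemf_coeff hg) ?subrr //= mdeg_chi; exact: negbT.
Qed.
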